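(* Let $V$ be a commutative unital quantale whose underlying lattice is a frame. The forgetful functor $\mathsf{U}_1\colon\mathsf{VGrp}\to\mathsf{Grp}$ (forgetting the $V$-category structure) is topological, and the forgetful functor $\mathsf{U}_2\colon\mathsf{VGrp}\to\mathsf{VCat}$ (forgetting the group structure) is monadic.
   Context: A commutative unital quantale $V$ is a complete lattice with a commutative associative operation $\otimes$ with unit $k$ preserving arbitrary joins in each variable; standing assumption: as a lattice $V$ is a frame. A $V$-category $(X,a)$ is a set with $a\colon X\times X\to V$ such that $k\le a(x,x)$ and $a(x,x')\otimes a(x',x'')\le a(x,x'')$; a $V$-functor $f\colon(X,a)\to(Y,b)$ satisfies $a(x,x')\le b(f(x),f(x'))$; category $\mathsf{VCat}$. A $V$-group $(X,a,+)$ is a $V$-category with a group structure (additive, not necessarily abelian) such that $a(x_1,x_2)\otimes a(x_1',x_2')\le a(x_1+x_1',x_2+x_2')$; $V$-homomorphisms are group homomorphisms that are $V$-functors; category $\mathsf{VGrp}$. A faithful functor $U\colon\mathcal A\to\mathcal X$ is topological if every $U$-structured source $(f_i\colon X\to UA_i)_{i\in I}$ has a unique $U$-initial lift. *)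

(* Defs.v *)
Set Implicit Arguments.
Unset Strict Implicit.

Record quantale := Quantale {
  q_car :> Type;
  q_le : q_car -> q_car -> Prop;
  q_le_refl : forall a, q_le a a;
  q_le_trans : forall a b c, q_le a b -> q_le b c -> q_le a c;
  q_le_antisym : forall a b, q_le a b -> q_le b a -> a = b;
  q_sup : (q_car -> Prop) -> q_car;
  q_sup_ub : forall (S : q_car -> Prop) a, S a -> q_le a (q_sup S);
  q_sup_least : forall (S : q_car -> Prop) b,
      (forall a, S a -> q_le a b) -> q_le (q_sup S) b;
  q_ten : q_car -> q_car -> q_car;
  q_k : q_car;
  q_ten_assoc : forall a b c, q_ten a (q_ten b c) = q_ten (q_ten a b) c;
  q_ten_comm : forall a b, q_ten a b = q_ten b a;
  q_ten_unit : forall a, q_ten q_k a = a;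
  q_ten_sup_r : forall a (S : q_car -> Prop),
      q_ten a (q_sup S) = q_sup (fun y => exists x, S x /\ y = q_ten a x);
  q_ten_sup_l : forall a (S : q_car -> Prop),
      q_ten (q_sup S) a = q_sup (fun y => exists x, S x /\ y = q_ten x a)
}.

Arguments q_le {q}.
Arguments q_sup {q}.
Arguments q_ten {q}.
Arguments q_k {q}.

Definition q_meet (V : quantale) (a b : V) : V :=
  q_sup (fun c => q_le c a /\ q_le c b).

Definition is_frame (V : quantale) : Prop :=
  forall (a : V) (S : V -> Prop),
    q_meet a (q_sup S) = q_sup (fun y => exists x, S x /\ y = q_meet a x).

Record grp := Grp {
  g_car :> Type;
  g_add : g_car -> g_car -> g_car;
  g_zero : g_car;
  g_neg : g_car -> g_car;
  g_assoc : forall x y z, g_add x (g_add y z) = g_add (g_add x y) z;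
  g_zero_l : forall x, g_add g_zero x = x;
  g_zero_r : forall x, g_add x g_zero = x;
  g_neg_l : forall x, g_add (g_neg x) x = g_zero;
  g_neg_r : forall x, g_add x (g_neg x) = g_zero
}.

Arguments g_add {g}.
Arguments g_zero {g}.
Arguments g_neg {g}.

Definition grp_hom (G H : grp) (f : G -> H) : Prop :=
  forall x y, f (g_add x y) = g_add (f x) (f y).

Section VStructures.
Variable V : quantale.

Definition is_vcat_str (X : Type) (a : X -> X -> V) : Prop :=
  (forall x, q_le q_k (a x x)) /\
  (forall x x' x'', q_le (q_ten (a x x') (a x' x'')) (a x x'')).

Record vcat := VCat {
  vc_car :> Type;
  vc_hom : vc_car -> vc_car -> V;
  vc_ax : is_vcat_str vc_hom
}.

Definition vfun (X Y : vcat) (f : X -> Y) : Prop :=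
  forall x x', q_le (vc_hom x x') (vc_hom (f x) (f x')).

Definition is_vgrp_str (G : grp) (a : G -> G -> V) : Prop :=
  is_vcat_str a /\
  (forall x1 x2 y1 y2,
      q_le (q_ten (a x1 x2) (a y1 y2)) (a (g_add x1 y1) (g_add x2 y2))).

Record vgrp := VGrp {
  vg_grp : grp;
  vg_hom : vg_grp -> vg_grp -> V;
  vg_ax : is_vgrp_str vg_hom
}.

Definition U1 (A : vgrp) : grp := vg_grp A.

Definition U2 (A : vgrp) : vcat :=
  @VCat (g_car (vg_grp A)) (@vg_hom A) (proj1 (vg_ax A)).

Definition vhom (A B : vgrp) (f : vg_grp A -> vg_grp B) : Prop :=
  grp_hom f /\ vfun (X := U2 A) (Y := U2 B) f.

Definition is_initial_lift (G : grp) (I : Type) (A : I -> vgrp)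
    (f : forall i, G -> vg_grp (A i)) (a : G -> G -> V) (Ha : is_vgrp_str a) : Prop :=
  let L := @VGrp G a Ha in
  (forall i, vhom (A := L) (B := A i) (f i)) /\
  (forall (B : vgrp) (g : vg_grp B -> G), grp_hom g ->
     (forall i, vhom (A := B) (B := A i) (fun y => f i (g y))) ->
     vhom (A := B) (B := L) g).

Definition U1_topological : Prop :=
  forall (G : grp) (I : Type) (A : I -> vgrp) (f : forall i, G -> vg_grp (A i)),
    (forall i, grp_hom (f i)) ->
    exists (a : G -> G -> V) (Ha : is_vgrp_str a),
      is_initial_lift f Ha /\
      (forall (a' : G -> G -> V) (Ha' : is_vgrp_str a'),
          is_initial_lift f Ha' -> forall x y, a' x y = a x y).

(* A left adjoint to U2 given by universal arrows:
   Fo X is the free V-group on X, eta X : X -> U2 (Fo X) the unit, and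
   ext X B f : Fo X -> B the unique V-homomorphism extending f along eta. *)
Section Monadic.
Variable Fo : vcat -> vgrp.
Variable eta : forall X : vcat, X -> vg_grp (Fo X).
Variable ext : forall (X : vcat) (B : vgrp), (X -> vg_grp B) -> vg_grp (Fo X) -> vg_grp B.

Definition left_adjoint_spec : Prop :=
  (forall X : vcat, vfun (X := X) (Y := U2 (Fo X)) (@eta X)) /\
  (forall (X : vcat) (B : vgrp) (f : X -> vg_grp B),
     vfun (X := X) (Y := U2 B) f ->
     vhom (A := Fo X) (B := B) (ext f) /\
     (forall x, ext f (eta x) = f x) /\
     (forall g : vg_grp (Fo X) -> vg_grp B,
        vhom (A := Fo X) (B := B) g -> (forall x, g (eta x) = f x) ->
        forall y, g y = ext f y)).

Definition T (X : vcat) : vcat := U2 (Fo X).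
Definition Tmap (X Y : vcat) (h : X -> Y) : T X -> T Y :=
  ext (X := X) (B := Fo Y) (fun x => eta (h x)).
Definition counit (B : vgrp) : vg_grp (Fo (U2 B)) -> vg_grp B :=
  ext (X := U2 B) (B := B) (fun y => y).
Definition mu (X : vcat) : T (T X) -> T X := @counit (Fo X).

Definition is_algebra (X : vcat) (xi : T X -> X) : Prop :=
  vfun (X := T X) (Y := X) xi /\
  (forall x, xi (eta x) = x) /\
  (forall t : T (T X), xi (Tmap xi t) = xi (mu t)).

Definition is_alg_morph (X Y : vcat) (xi : T X -> X) (zeta : T Y -> Y) (h : X -> Y) : Prop :=
  vfun h /\ forall t : T X, h (xi t) = zeta (Tmap h t).

(* Comparison functor K : VGrp -> VCat^T, K B = (U2 B, U2 epsilon_B), identity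
   on underlying maps (hence automatically faithful). K is an equivalence iff it
   is full and essentially surjective. *)
Definition comparison_equivalence : Prop :=
  (forall (A B : vgrp) (h : vg_grp A -> vg_grp B),
     is_alg_morph (X := U2 A) (Y := U2 B) (@counit A) (@counit B) h ->
     vhom (A := A) (B := B) h) /\
  (forall (X : vcat) (xi : T X -> X), is_algebra xi ->
     exists (B : vgrp) (h : X -> vg_grp B) (g : vg_grp B -> X),
       is_alg_morph (X := X) (Y := U2 B) xi (@counit B) h /\
       is_alg_morph (X := U2 B) (Y := X) (@counit B) xi g /\
       (forall x, g (h x) = x) /\ (forall y, h (g y) = y)).
End Monadic.

Definition U2_monadic : Prop :=
  exists (Fo : vcat -> vgrp)
         (eta : forall X : vcat, X -> vg_grp (Fo X))
         (ext : forall (X : vcat) (B : vgrp), (X -> vg_grp B) -> vg_grp (Fo X) -> vg_grp B),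
    left_adjoint_spec eta ext /\ comparison_equivalence eta ext.

End VStructures.

(* Main.v *)
Require Import Defs.
From Stdlib Require Import List Bool ClassicalEpsilon PropExtensionality FunctionalExtensionality ProofIrrelevance.
Import ListNotations.

Definition word (X : Type) := list (X * bool).

Inductive frel {X : Type} : word X -> word X -> Prop :=
| fr_refl w : frel w w
| fr_sym u v : frel u v -> frel v u
| fr_trans u v w : frel u v -> frel v w -> frel u w
| fr_cancel u v x b : frel (u ++ (x,b) :: (x, negb b) :: v) (u ++ v).

Lemma frel_app_l {X} (p u u' : word X) : frel u u' -> frel (p ++ u) (p ++ u').
Proof.
  induction 1.
  - apply fr_refl.
  - apply fr_sym; auto.
  - eapply fr_trans; eauto.
  - rewrite !app_assoc. apply fr_cancel.
Qed.

Lemma frel_app_r {X} (q u u' : word X) : frel u u' -> frel (u ++ q) (u' ++ q).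
Proof.
  induction 1.
  - apply fr_refl.
  - apply fr_sym; auto.
  - eapply fr_trans; eauto.
  - rewrite <- !app_assoc. simpl. apply fr_cancel.
Qed.

Lemma frel_app {X} (u u' v v' : word X) : frel u u' -> frel v v' -> frel (u ++ v) (u' ++ v').
Proof.
  intros H1 H2. eapply fr_trans. apply frel_app_r, H1. apply frel_app_l, H2.
Qed.

Definition flip {X} (p : X * bool) : X * bool := (fst p, negb (snd p)).
Definition winv {X} (w : word X) : word X := rev (map flip w).

Lemma frel_inv {X} (u v : word X) : frel u v -> frel (winv u) (winv v).
Proof.
  unfold winv. induction 1.
  - apply fr_refl.
  - apply fr_sym; auto.
  - eapply fr_trans; eauto.
  - rewrite !map_app, !rev_app_distr. simpl. rewrite <- !app_assoc. simpl.
    unfold flip; simpl. rewrite negb_involutive. apply fr_cancel.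
Qed.

Lemma winv_l {X} (w : word X) : frel (winv w ++ w) [].
Proof.
  unfold winv. induction w as [|[x b] w IH]; simpl.
  - apply fr_refl.
  - rewrite <- app_assoc. simpl.
    eapply fr_trans; [|exact IH].
    pose proof (@fr_cancel X (rev (map flip w)) w x (negb b)) as H.
    rewrite negb_involutive in H. unfold flip; simpl. exact H.
Qed.

Lemma winv_inv {X} (w : word X) : winv (winv w) = w.
Proof.
  unfold winv. rewrite map_rev, rev_involutive, map_map.
  induction w as [|[x b] w IH]; simpl; [reflexivity|].
  unfold flip at 1 2; simpl. rewrite negb_involutive. f_equal. exact IH.
Qed.

Lemma winv_r {X} (w : word X) : frel (w ++ winv w) [].
Proof.
  pose proof (winv_l (winv w)) as H. rewrite winv_inv in H. exact H.
Qed.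

Definition FC (X : Type) := { P : word X -> Prop | exists w, P = frel w }.
Definition cls {X} (w : word X) : FC X := exist _ (frel w) (ex_intro _ w eq_refl).
Definition rep {X} (P : FC X) : word X :=
  proj1_sig (constructive_indefinite_description _ (proj2_sig P)).

Lemma cls_rep {X} (P : FC X) : cls (rep P) = P.
Proof.
  unfold rep. destruct (constructive_indefinite_description _ (proj2_sig P)) as [w Hw].
  simpl. destruct P as [p Hp]. simpl in Hw. subst p. unfold cls. f_equal. apply proof_irrelevance.
Qed.

Lemma cls_eq {X} (u v : word X) : frel u v -> cls u = cls v.
Proof.
  intro H. unfold cls.
  assert (E : frel u = frel v).
  { apply functional_extensionality; intro w. apply propositional_extensionality; split; intro H'.
    - eapply fr_trans; [apply fr_sym, H|exact H'].
    - eapply fr_trans; [exact H|exact H']. }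
  revert H. generalize (ex_intro (fun w : word X => frel u = frel w) u eq_refl).
  generalize (ex_intro (fun w : word X => frel v = frel w) v eq_refl).
  rewrite E. intros e1 e2 _. f_equal. apply proof_irrelevance.
Qed.

Lemma cls_inj {X} (u v : word X) : cls u = cls v -> frel u v.
Proof.
  intro H. apply (f_equal (@proj1_sig _ _)) in H. simpl in H.
  assert (frel u u) by apply fr_refl. rewrite H in H0. apply fr_sym. exact H0.
Qed.

Lemma rep_spec {X} (w : word X) : frel (rep (cls w)) w.
Proof. apply cls_inj. rewrite cls_rep. reflexivity. Qed.

Definition fadd {X} (P Q : FC X) : FC X := cls (rep P ++ rep Q).
Definition fzero {X} : FC X := cls [].
Definition fneg {X} (P : FC X) : FC X := cls (winv (rep P)).

Lemma fadd_cls {X} (u v : word X) : fadd (cls u) (cls v) = cls (u ++ v).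
Proof. apply cls_eq, frel_app; apply rep_spec. Qed.
Lemma fneg_cls {X} (u : word X) : fneg (cls u) = cls (winv u).
Proof. apply cls_eq, frel_inv, rep_spec. Qed.

Lemma f_assoc {X} (P Q R : FC X) : fadd P (fadd Q R) = fadd (fadd P Q) R.
Proof.
  rewrite <- (cls_rep P), <- (cls_rep Q), <- (cls_rep R). rewrite !fadd_cls, app_assoc. reflexivity.
Qed.
Lemma f_zero_l {X} (P : FC X) : fadd fzero P = P.
Proof. rewrite <- (cls_rep P). unfold fzero. rewrite fadd_cls. reflexivity. Qed.
Lemma f_zero_r {X} (P : FC X) : fadd P fzero = P.
Proof. rewrite <- (cls_rep P). unfold fzero. rewrite fadd_cls, app_nil_r. reflexivity. Qed.
Lemma f_neg_l {X} (P : FC X) : fadd (fneg P) P = fzero.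
Proof. rewrite <- (cls_rep P). rewrite fneg_cls, fadd_cls. apply cls_eq, winv_l. Qed.
Lemma f_neg_r {X} (P : FC X) : fadd P (fneg P) = fzero.
Proof. rewrite <- (cls_rep P). rewrite fneg_cls, fadd_cls. apply cls_eq, winv_r. Qed.

Definition FG (X : Type) : grp :=
  @Grp (FC X) fadd fzero fneg f_assoc f_zero_l f_zero_r f_neg_l f_neg_r.

Definition feta {X} (x : X) : FG X := cls [(x, true)].

Definition lett {X} {B : grp} (f : X -> B) (p : X * bool) : B :=
  if snd p then f (fst p) else g_neg (f (fst p)).
Definition evalw {X} {B : grp} (f : X -> B) (w : word X) : B :=
  fold_right (fun p acc => g_add (lett f p) acc) g_zero w.

Lemma evalw_app {X} {B : grp} (f : X -> B) (u v : word X) :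
  evalw f (u ++ v) = g_add (evalw f u) (evalw f v).
Proof.
  induction u; simpl. - rewrite g_zero_l. reflexivity.
  - rewrite IHu, g_assoc. reflexivity.
Qed.

Lemma evalw_frel {X} {B : grp} (f : X -> B) (u v : word X) : frel u v -> evalw f u = evalw f v.
Proof.
  induction 1; auto. - congruence.
  - rewrite !evalw_app. simpl. rewrite (g_assoc (lett f (x,b))).
    assert (E : g_add (lett f (x,b)) (lett f (x, negb b)) = g_zero).
    { unfold lett; destruct b; simpl. apply g_neg_r. apply g_neg_l. }
    rewrite E, g_zero_l. reflexivity.
Qed.

Definition flift {X} {B : grp} (f : X -> B) (P : FG X) : B := evalw f (rep P).

Lemma flift_cls {X} {B : grp} (f : X -> B) w : flift f (cls w) = evalw f w.
Proof. apply evalw_frel, rep_spec. Qed.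

Lemma flift_hom {X} {B : grp} (f : X -> B) : grp_hom (flift f).
Proof.
  intros P Q. simpl. unfold fadd. rewrite flift_cls, evalw_app. reflexivity.
Qed.

Lemma flift_eta {X} {B : grp} (f : X -> B) x : flift f (feta x) = f x.
Proof. unfold feta. rewrite flift_cls. simpl. unfold lett; simpl. apply g_zero_r. Qed.

Lemma inv_unique {B : grp} (a b : B) : g_add a b = g_zero -> a = g_neg b.
Proof.
  intro H. rewrite <- (g_zero_r a), <- (g_neg_r b), g_assoc, H, g_zero_l. reflexivity.
Qed.

Lemma hom_zero {G B : grp} (g : G -> B) : grp_hom g -> g g_zero = g_zero.
Proof.
  intro Hg. assert (E : g (g_add g_zero g_zero) = g_add (g g_zero) (g g_zero)) by apply Hg.
  rewrite g_zero_l in E.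
  rewrite <- (g_zero_l (g g_zero)) at 1. rewrite <- (g_neg_l (g g_zero)) at 1.
  rewrite <- g_assoc, <- E. apply g_neg_l.
Qed.

Lemma hom_neg {G B : grp} (g : G -> B) x : grp_hom g -> g (g_neg x) = g_neg (g x).
Proof.
  intro Hg. apply inv_unique. rewrite <- Hg, g_neg_l. apply hom_zero, Hg.
Qed.

Lemma flift_unique {X} {B : grp} (f : X -> B) (g : FG X -> B) :
  grp_hom g -> (forall x, g (feta x) = f x) -> forall P, g P = flift f P.
Proof.
  intros Hg He P. rewrite <- (cls_rep P). rewrite flift_cls.
  induction (rep P) as [|[x b] w IH]; simpl.
  - apply (hom_zero g Hg).
  - change ((x,b) :: w) with ([(x,b)] ++ w). rewrite <- fadd_cls.
    change (g (g_add (cls [(x,b)] : FG X) (cls w)) = g_add (lett f (x,b)) (evalw f w)).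
    rewrite Hg, IH. f_equal. unfold lett; destruct b; simpl.
    + apply He.
    + rewrite <- He. rewrite <- (hom_neg g _ Hg). f_equal.
      change (cls [(x,false)] = fneg (cls [(x,true)])). rewrite fneg_cls. reflexivity.
Qed.

Set Implicit Arguments.
Unset Strict Implicit.

Lemma ten_mono_l (V : quantale) (a b c : V) : q_le a b -> q_le (q_ten a c) (q_ten b c).
Proof.
  intro H.
  assert (E : q_sup (fun y => y = a \/ y = b) = b).
  { apply q_le_antisym.
    - apply q_sup_least. intros y [->| ->]; [exact H|apply q_le_refl].
    - apply q_sup_ub. right; reflexivity. }
  rewrite <- E. rewrite q_ten_sup_l. apply q_sup_ub. exists a. split; auto.
Qed.

Lemma ten_mono (V : quantale) (a b c d : V) : q_le a b -> q_le c d -> q_le (q_ten a c) (q_ten b d).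
Proof.
  intros H1 H2. eapply q_le_trans. apply ten_mono_l, H1.
  rewrite !(q_ten_comm b). apply ten_mono_l, H2.
Qed.

Definition vmeet (V : quantale) (G : Type) (P : (G -> G -> V) -> Prop) : G -> G -> V :=
  fun u v => q_sup (fun t => forall c, P c -> q_le t (c u v)).

Lemma vmeet_lb (V : quantale) (G : Type) (P : (G -> G -> V) -> Prop) c u v :
  P c -> q_le (vmeet P u v) (c u v).
Proof. intro Hc. apply q_sup_least. intros t Ht. apply Ht, Hc. Qed.

Lemma vmeet_glb (V : quantale) (G : Type) (P : (G -> G -> V) -> Prop) t u v :
  (forall c, P c -> q_le t (c u v)) -> q_le t (vmeet P u v).
Proof. intro H. apply q_sup_ub. exact H. Qed.

Lemma vmeet_str (V : quantale) (G : grp) (P : (G -> G -> V) -> Prop) :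
  (forall c, P c -> is_vgrp_str c) -> is_vgrp_str (vmeet P).
Proof.
  intro HP. split; [split|].
  - intro x. apply vmeet_glb. intros c Hc. apply (HP c Hc).
  - intros x y z. apply vmeet_glb. intros c Hc. eapply q_le_trans; [|apply (HP c Hc)].
    apply ten_mono; apply vmeet_lb; exact Hc.
  - intros x1 x2 y1 y2. apply vmeet_glb. intros c Hc. eapply q_le_trans; [|apply (HP c Hc)].
    apply ten_mono; apply vmeet_lb; exact Hc.
Qed.

Lemma pullback_str (V : quantale) (G H : grp) (h : G -> H) (b : H -> H -> V) :
  grp_hom h -> is_vgrp_str b -> is_vgrp_str (fun x y => b (h x) (h y)).
Proof.
  intros Hh [[Hr Ht] Hc]. split; [split|].
  - intro x. apply Hr.
  - intros x y z. apply Ht.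
  - intros x1 x2 y1 y2. rewrite !Hh. apply Hc.
Qed.

Lemma part1 (V : quantale) : U1_topological V.
Proof.
  intros G I A f Hf.
  set (P := fun c : G -> G -> V => exists i, c = fun x y => vg_hom (f i x) (f i y)).
  assert (HP : forall c, P c -> is_vgrp_str c).
  { intros c [i ->]. apply pullback_str. apply Hf. apply vg_ax. }
  assert (Hinit : forall (a' : G -> G -> V) (Ha' : is_vgrp_str a'),
    (forall i x y, q_le (a' x y) (vg_hom (f i x) (f i y))) -> is_initial_lift f Ha' ->
    forall x y, a' x y = vmeet P x y).
  { intros a' Ha' Hle Hl x y. apply q_le_antisym.
    - apply vmeet_glb. intros c [i ->]. apply Hle.
    - destruct Hl as [_ Hu].
      destruct (Hu (VGrp (vmeet_str HP)) (fun z => z)) as [_ Hv].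
      + intros u v; reflexivity.
      + intro i. split. apply Hf. intros u v. simpl. exact (@vmeet_lb _ _ P (fun x y => vg_hom (f i x) (f i y)) u v (ex_intro _ i eq_refl)).
      + apply Hv. }
  exists (vmeet P), (vmeet_str HP). split.
  - split.
    + intro i. split. apply Hf. intros u v. simpl. exact (@vmeet_lb _ _ P (fun x y => vg_hom (f i x) (f i y)) u v (ex_intro _ i eq_refl)).
    + intros B g Hg Hi. split; [exact Hg|]. intros u v. simpl. apply vmeet_glb.
      intros c [i ->]. apply (proj2 (Hi i)).
  - intros a' Ha' Hl. apply (Hinit a' Ha'); [|exact Hl].
    intros i x y. apply (proj2 (proj1 Hl i)).
Qed.

Definition Pfree (V : quantale) (X : vcat V) (c : FG X -> FG X -> V) : Prop :=
  is_vgrp_str c /\ forall x x' : X, q_le (vc_hom x x') (c (feta x) (feta x')).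

Lemma Pfree_str (V : quantale) (X : vcat V) : forall c, @Pfree V X c -> is_vgrp_str c.
Proof. intros c Hc; apply Hc. Qed.

Definition FoV (V : quantale) (X : vcat V) : vgrp V :=
  @VGrp V (FG X) (vmeet (@Pfree V X)) (vmeet_str (@Pfree_str V X)).

Definition etaV (V : quantale) (X : vcat V) : X -> vg_grp (FoV X) := fun x => feta x.

Definition extV (V : quantale) (X : vcat V) (B : vgrp V) (f : X -> vg_grp B) :
  vg_grp (FoV X) -> vg_grp B := flift f.

Lemma la_spec (V : quantale) : left_adjoint_spec (@etaV V) (@extV V).
Proof.
  split.
  - intros X x x'. simpl. apply vmeet_glb. intros c Hc. apply Hc.
  - intros X B f Hf. split; [|split].
    + split. apply flift_hom. intros u v. simpl.
      refine (@vmeet_lb _ _ (@Pfree V X) (fun u v => vg_hom (flift f u) (flift f v)) u v _).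
      split. apply (pullback_str (flift_hom f) (vg_ax B)).
      intros x x'. rewrite !flift_eta. apply Hf.
    + intro x. apply flift_eta.
    + intros g [Hg _] He y. apply (flift_unique f g Hg He).
Qed.


Lemma vhom_comp (V : quantale) (A B C : vgrp V) (g : vg_grp A -> vg_grp B) (h : vg_grp B -> vg_grp C) :
  vhom (A:=A) (B:=B) g -> vhom (A:=B) (B:=C) h -> vhom (A:=A) (B:=C) (fun x => h (g x)).
Proof.
  intros [Hg1 Hg2] [Hh1 Hh2]. split.
  - intros x y. simpl. rewrite Hg1. apply Hh1.
  - intros x y. eapply q_le_trans. apply Hg2. apply Hh2.
Qed.

Lemma monadic_abs (V : quantale) (Fo : vcat V -> vgrp V)
  (eta : forall X : vcat V, X -> vg_grp (Fo X))
  (ext : forall (X : vcat V) (B : vgrp V), (X -> vg_grp B) -> vg_grp (Fo X) -> vg_grp B) :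
  left_adjoint_spec eta ext -> comparison_equivalence eta ext.
Proof.
  intros [Heta Hext].
  assert (Hid : forall B : vgrp V, vfun (X:=U2 B) (Y:=U2 B) (fun y => y)).
  { intros B x x'. apply q_le_refl. }
  assert (Hce : forall (B : vgrp V) (y : vg_grp B), @counit V Fo ext B (eta (U2 B) y) = y).
  { intros B y. apply (Hext (U2 B) B (fun y => y) (Hid B)). }
  assert (Hch : forall B : vgrp V, vhom (A:=Fo (U2 B)) (B:=B) (@counit V Fo ext B)).
  { intro B. apply (Hext (U2 B) B (fun y => y) (Hid B)). }
  assert (Hcomp : forall (X Y : vcat V) (h : X -> Y), vfun h ->
            vfun (X:=X) (Y:=U2 (Fo Y)) (fun x => eta Y (h x))).
  { intros X Y h Hh x x'. eapply q_le_trans. apply Hh. apply (Heta Y). }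
  assert (HTe : forall (X Y : vcat V) (h : X -> Y), vfun h -> forall x,
            Tmap eta ext h (eta X x) = eta Y (h x)).
  { intros X Y h Hh x. apply (Hext X (Fo Y) _ (Hcomp X Y h Hh)). }
  assert (HTh : forall (X Y : vcat V) (h : X -> Y), vfun h ->
            vhom (A:=Fo X) (B:=Fo Y) (Tmap eta ext h)).
  { intros X Y h Hh. apply (Hext X (Fo Y) _ (Hcomp X Y h Hh)). }
  split.
  - intros A B h [Hh Hm]. split; [|exact Hh]. intros x y.
    assert (E : @counit V Fo ext A (g_add (eta (U2 A) x) (eta (U2 A) y)) = g_add x y).
    { rewrite (proj1 (Hch A)). rewrite !Hce. reflexivity. }
    rewrite <- E. rewrite Hm. rewrite (proj1 (HTh (U2 A) (U2 B) h Hh)). rewrite !(HTe (U2 A) (U2 B) h Hh).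
    rewrite (proj1 (Hch B)). rewrite !Hce. reflexivity.
  - intros X xi [Hxv [Hxe Hxm]].
    assert (Hadd : forall u v : vg_grp (Fo X),
      xi (g_add (eta X (xi u)) (eta X (xi v))) = xi (g_add u v)).
    { intros u v.
      pose proof (Hxm (g_add (eta (T Fo X) u) (eta (T Fo X) v))) as H.
      rewrite (proj1 (HTh (T Fo X) X xi Hxv)) in H. rewrite !(HTe (T Fo X) X xi Hxv) in H.
      unfold mu in H. rewrite (proj1 (Hch (Fo X))) in H. rewrite !Hce in H. exact H. }
    set (addX := fun x y : X => xi (g_add (eta X x) (eta X y))).
    set (zeroX := xi g_zero).
    set (negX := fun x : X => xi (g_neg (eta X x))).
    assert (Ha : forall u v, addX (xi u) (xi v) = xi (g_add u v)) by (intros; apply Hadd).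
    assert (H1 : forall x y z, addX x (addX y z) = addX (addX x y) z).
    { intros x y z. rewrite <- (Hxe x), <- (Hxe z). unfold addX at 2 4. rewrite !Ha.
      rewrite !Hxe. rewrite g_assoc. reflexivity. }
    assert (H2 : forall x, addX zeroX x = x).
    { intros x. rewrite <- (Hxe x) at 1. unfold zeroX. rewrite Ha, g_zero_l. apply Hxe. }
    assert (H3 : forall x, addX x zeroX = x).
    { intros x. rewrite <- (Hxe x) at 1. unfold zeroX. rewrite Ha, g_zero_r. apply Hxe. }
    assert (H4 : forall x, addX (negX x) x = zeroX).
    { intros x. rewrite <- (Hxe x) at 2. unfold negX. rewrite Ha, g_neg_l. reflexivity. }
    assert (H5 : forall x, addX x (negX x) = zeroX).
    { intros x. rewrite <- (Hxe x) at 1. unfold negX. rewrite Ha, g_neg_r. reflexivity. }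
    pose (BG := @Grp (vc_car X) addX zeroX negX H1 H2 H3 H4 H5).
    assert (Hstr : is_vgrp_str (G:=BG) (@vc_hom V X)).
    { split. exact (vc_ax X). intros x1 x2 y1 y2. simpl. unfold addX.
      eapply q_le_trans; [|apply (Hxv (g_add (eta X x1) (eta X y1)) (g_add (eta X x2) (eta X y2)))].
      eapply q_le_trans; [|apply (proj2 (vg_ax (Fo X)))].
      apply ten_mono; apply Heta. }
    pose (B := @VGrp V BG (@vc_hom V X) Hstr).
    assert (Hxh : vhom (A:=Fo X) (B:=B) xi).
    { split. intros u v. simpl. symmetry. apply Ha. intros u v. apply Hxv. }
    assert (Hidv : vfun (X:=X) (Y:=U2 B) (fun x : X => x : vg_grp B)).
    { intros x x'. apply q_le_refl. }
    assert (Hidv' : vfun (X:=U2 B) (Y:=X) (fun y : vg_grp B => y : X)).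
    { intros x x'. apply q_le_refl. }
    exists B, (fun x => x), (fun y => y). split; [|split; [|split]].
    + split; [exact Hidv|]. intro t.
      pose proof (proj2 (proj2 (Hext X B (fun x : X => x : vg_grp B) Hidv))) as U.
      rewrite (U xi Hxh Hxe t).
      symmetry. apply (U (fun t => @counit V Fo ext B (@Tmap V Fo eta ext X (U2 B) (fun x => x) t))).
      * apply vhom_comp. apply HTh, Hidv. apply Hch.
      * intro x. rewrite (HTe X (U2 B) _ Hidv). apply Hce.
    + split; [exact Hidv'|]. intro t.
      pose proof (proj2 (proj2 (Hext (U2 B) B (fun y => y) (Hid B)))) as U.
      symmetry. apply (U (fun t => xi (@Tmap V Fo eta ext (U2 B) X (fun y => y) t))).
      * apply (vhom_comp (B:=Fo X)). apply HTh, Hidv'. exact Hxh.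
      * intro x. rewrite (HTe (U2 B) X _ Hidv'). apply Hxe.
    + reflexivity.
    + reflexivity.
Qed.

Theorem theorem4p1 (V : quantale) (HV : is_frame V) :
  U1_topological V /\ U2_monadic V.
Proof.
  split.
  - apply part1.
  - exists (@FoV V), (@etaV V), (@extV V). split.
    + apply la_spec.
    + apply monadic_abs, la_spec.
Qed.
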